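(* Let $K\subset\mathbb{R}^m$ be a pointed, closed, convex cone with nonempty interior which is finitely generated, let $C\subset\mathbb{R}^m$ be a finite set with $0\notin C$ and $K^*=\operatorname{cone}(\operatorname{conv}(C))$, and let $F:\mathbb{R}^n\to\mathbb{R}^m$ be continuously differentiable. Define $h(x,d)=\max\{\langle JF(x)d,w\rangle : w\in C\}$ and $v(x)=\arg\min_{d}\{h(x,d)+\tfrac12\|d\|^2\}$. Fix $0<\rho<\sigma<1$, $\mu>2$, and $e\in\operatorname{int}(K)$ with $\langle w,e\rangle\le1$ for all $w\in C$. Let $x^0\in\mathbb{R}^n$ and assume: (A1) there is an open set $\Lambda$ containing $\mathcal{L}=\{x: F(x)\preceq_K F(x^0)\}$ such that $\|JF(x)-JF(y)\|\le L\|x-y\|$ for all $x,y\in\Lambda$; (A2) every sequence $\{D_k\}\subset F(\mathcal{L})$ with $D_{k+1}\preceq_K D_k$ for all $k$ admits $D\in\mathbb{R}^m$ with $D\preceq_K D_k$ for all $k$. Let $\{x^k\}$ be an infinite sequence generated as follows: $d^0=v(x^0)$; for $k\ge1$, $d^k=v(x^k)+\beta_k d^{k-1}$ with $$\beta_k=\frac{-h(x^k,v(x^k))\big(|h(x^{k-1},v(x^k))|+h(x^{k-1},v(x^k))\big)}{\max\big\{\mu|h(x^k,d^{k-1})h(x^{k-1},v(x^k))|,\ -\mu h(x^{k-1},v(x^{k-1}))|h(x^{k-1},v(x^k))|\big\}};$$ $x^{k+1}=x^k+\alpha_kd^k$, where $\alpha_k>0$ satisfies the standard Wolfe conditions $$F(x^k+\alpha_kd^k)\preceq_K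 F(x^k)+\rho\alpha_k h(x^k,d^k)e,\qquad h(x^k+\alpha_kd^k,d^k)\ge\sigma h(x^k,d^k).$$ Then $$\sum_{k\ge0}\frac{h^2(x^k,d^k)}{\|d^k\|^2}<\infty.$$
   Context: $u\preceq_K v$ means $v-u\in K$. $K^*$ is the positive polar cone of $K$ and $JF$ the Jacobian of $F$. The sequence is assumed infinite, i.e. $v(x^k)\neq0$ for all $k$ (equivalently no $x^k$ is a $K$-Pareto critical point). *)

(* Defs.v *)
From HB Require Import structures.
From mathcomp Require Import all_boot all_order all_algebra.
From mathcomp Require Import all_classical all_reals all_analysis.
Set Implicit Arguments. Unset Strict Implicit. Unset Printing Implicit Defensive.
Import Order.TTheory GRing.Theory Num.Theory.
Import numFieldNormedType.Exports.
Local Open Scope classical_set_scope.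
Local Open Scope ring_scope.

Definition dotv (R : realType) (p : nat) (u w : 'cV[R]_p) : R :=
  \sum_(i < p) u i 0 * w i 0.

Definition leK (R : realType) (p : nat) (K : set 'cV[R]_p) (u w : 'cV[R]_p) : Prop :=
  K (w - u).

Definition convex_cone (R : realType) (p : nat) (K : set 'cV[R]_p) : Prop :=
  K 0 /\ (forall u w, K u -> K w -> K (u + w)) /\
  (forall (t : R) u, 0 <= t -> K u -> K (t *: u)).

Definition pointed_cone (R : realType) (p : nat) (K : set 'cV[R]_p) : Prop :=
  forall u, K u -> K (- u) -> u = 0.

Definition conic_hull (R : realType) (p : nat) (G : seq 'cV[R]_p) : set 'cV[R]_p :=
  [set u | exists t : nat -> R, (forall i, 0 <= t i) /\
           u = \sum_(i < size G) t i *: G`_i].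

Definition finitely_generated (R : realType) (p : nat) (K : set 'cV[R]_p) : Prop :=
  exists G : seq 'cV[R]_p, K = conic_hull G.

Definition polar_cone (R : realType) (p : nat) (K : set 'cV[R]_p) : set 'cV[R]_p :=
  [set w | forall u, K u -> 0 <= dotv w u].

Definition conv_hull (R : realType) (p : nat) (C : seq 'cV[R]_p) : set 'cV[R]_p :=
  [set u | exists t : nat -> R, (forall i, 0 <= t i) /\
           \sum_(i < size C) t i = 1 /\ u = \sum_(i < size C) t i *: C`_i].

Definition cone_of (R : realType) (p : nat) (A : set 'cV[R]_p) : set 'cV[R]_p :=
  [set u | exists (t : R) a, 0 <= t /\ A a /\ u = t *: a].

(* h(x, d) = max { <JF(x) d, w> : w in C }  (C is nonempty under the hypotheses) *)
Definition hfun (R : realType) (n m : nat) (J : 'cV[R]_n -> 'M[R]_(m, n))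
  (C : seq 'cV[R]_m) (x d : 'cV[R]_n) : R :=
  \big[Num.max/dotv (J x *m d) (head 0 C)]_(w <- C) dotv (J x *m d) w.

Definition is_v (R : realType) (n m : nat) (J : 'cV[R]_n -> 'M[R]_(m, n))
  (C : seq 'cV[R]_m) (x u : 'cV[R]_n) : Prop :=
  forall d : 'cV[R]_n,
    hfun J C x u + dotv u u / 2 <= hfun J C x d + dotv d d / 2.

(* Main.v *)
Require Import Defs.
From HB Require Import structures.
From mathcomp Require Import all_boot all_order all_algebra.
From mathcomp Require Import all_classical all_reals all_analysis.
From mathcomp Require Import ring lra.
Import Order.TTheory GRing.Theory Num.Theory.
Import numFieldNormedType.Exports.
Local Open Scope classical_set_scope.
Local Open Scope ring_scope.
Set Implicit Arguments. Unset Strict Implicit.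

Section H.
Variable R : realType.

Lemma dotvDr p (u a b : 'cV[R]_p) : dotv u (a + b) = dotv u a + dotv u b.
Proof. by rewrite /dotv -big_split; apply: eq_bigr => i _; rewrite mxE mulrDr. Qed.
Lemma dotvDl p (u a b : 'cV[R]_p) : dotv (a + b) u = dotv a u + dotv b u.
Proof. by rewrite /dotv -big_split; apply: eq_bigr => i _; rewrite mxE mulrDl. Qed.
Lemma dotvZr p (u a : 'cV[R]_p) t : dotv u (t *: a) = t * dotv u a.
Proof. by rewrite /dotv mulr_sumr; apply: eq_bigr => i _; rewrite mxE mulrCA. Qed.
Lemma dotvNr p (u a : 'cV[R]_p) : dotv u (- a) = - dotv u a.
Proof. by rewrite -scaleN1r dotvZr mulN1r. Qed.
Lemma dotvBr p (u a b : 'cV[R]_p) : dotv u (a - b) = dotv u a - dotv u b.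
Proof. by rewrite dotvDr dotvNr. Qed.
Lemma dotv0r p (u : 'cV[R]_p) : dotv u 0 = 0.
Proof. by rewrite -(scale0r (0 : 'cV[R]_p)) dotvZr mul0r. Qed.
Lemma dotv0l p (u : 'cV[R]_p) : dotv 0 u = 0.
Proof. by rewrite /dotv big1 // => i _; rewrite mxE mul0r. Qed.
Lemma dotv_ge0 p (u : 'cV[R]_p) : 0 <= dotv u u.
Proof. by rewrite /dotv sumr_ge0 // => i _; rewrite -expr2 sqr_ge0. Qed.
Lemma dotv_gt0 p (u : 'cV[R]_p) : u != 0 -> 0 < dotv u u.
Proof.
move=> u0.
have [i ui] : exists i, u i 0 != 0.
  case: (pselect (exists i, u i 0 != 0)) => // H; exfalso.
  move/eqP: u0; apply; apply/matrixP => i j.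
  rewrite (ord1 j) mxE; apply/eqP; apply: contraT => ne; exfalso; apply: H; by exists i.
rewrite /dotv (bigD1 i) //=.
have h1 : 0 < u i 0 * u i 0 by rewrite -expr2 exprn_even_gt0.
have h2 : 0 <= \sum_(j < p | j != i) u j 0 * u j 0.
  by rewrite sumr_ge0 // => j _; rewrite -expr2 sqr_ge0.
lra.
Qed.

Lemma mxnorm_coef a b (M : 'M[R]_(a, b)) i j : `|M i j| <= `|M|.
Proof. by rewrite [in leRHS]/Num.Def.normr/= mx_normrE; exact: (le_bigmax _ _ (i, j)). Qed.
Lemma mxnorm_le a b (M : 'M[R]_(a, b)) c : 0 <= c -> (forall i j, `|M i j| <= c) -> `|M| <= c.
Proof. by move=> c0 H; rewrite /Num.Def.normr/= mx_normrE (bigmax_le _ c0) // => -[i j] _. Qed.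

Lemma dotv_bound p (a b : 'cV[R]_p) : `|dotv a b| <= p%:R * (`|a| * `|b|).
Proof.
rewrite /dotv (le_trans (ler_norm_sum _ _ _)) //.
rewrite mulr_natl -[X in _ *+ X]card_ord -sumr_const; apply: ler_sum => i _.
by rewrite normrM ler_pM // mxnorm_coef.
Qed.

Lemma mulmx_bound p q (M : 'M[R]_(p, q)) (u : 'cV[R]_q) :
  `|M *m u| <= q%:R * (`|M| * `|u|).
Proof.
apply: mxnorm_le; first by rewrite mulr_ge0 // mulr_ge0.
move=> i j; rewrite mxE (le_trans (ler_norm_sum _ _ _)) //.
rewrite mulr_natl -[X in _ *+ X]card_ord -sumr_const; apply: ler_sum => k _.
by rewrite normrM ler_pM // mxnorm_coef.
Qed.

Lemma norm_sq_dotv p (u : 'cV[R]_p) : `|u| ^+ 2 <= dotv u u.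
Proof.
have s0 := dotv_ge0 u.
have : `|u| <= Num.sqrt (dotv u u).
  apply: mxnorm_le; first exact: sqrtr_ge0.
  move=> i j; rewrite (ord1 j) -sqrtr_sqr ler_wsqrtr //.
  rewrite /dotv (bigD1 i) //= -expr2 lerDl sumr_ge0 // => k _.
  by rewrite -expr2 sqr_ge0.
move=> H; rewrite -(sqr_sqrtr s0) ler_pXn2r // ?nnegrE //; exact: sqrtr_ge0.
Qed.

End H.

Section Hf.
Variables (R : realType) (n m : nat) (J : 'cV[R]_n -> 'M[R]_(m, n)) (C : seq 'cV[R]_m).
Hypothesis Cne : C != [::].

Lemma hfun_ge x u w : w \in C -> dotv (J x *m u) w <= hfun J C x u.
Proof. by move=> wC; rewrite /hfun; apply: le_bigmax_seq. Qed.

Lemma hfun_le x u c : (forall w, w \in C -> dotv (J x *m u) w <= c) -> hfun J C x u <= c.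
Proof.
move=> H; rewrite /hfun big_seq; apply: bigmax_le.
  by apply: H; case: C Cne => // a s _; rewrite mem_head.
by move=> w wC; apply: H.
Qed.

Lemma hfun_add x a b : hfun J C x (a + b) <= hfun J C x a + hfun J C x b.
Proof.
apply: hfun_le => w wC; rewrite mulmxDr dotvDl.
by rewrite lerD // hfun_ge.
Qed.

Lemma hfun_scale x a t : 0 <= t -> hfun J C x (t *: a) <= t * hfun J C x a.
Proof.
move=> t0; apply: hfun_le => w wC; rewrite -scalemxAr.
have -> : dotv (t *: (J x *m a)) w = t * dotv (J x *m a) w.
  by rewrite /dotv mulr_sumr; apply: eq_bigr => i _; rewrite mxE mulrA.
by rewrite ler_wpM2l // hfun_ge.
Qed.

Lemma hfun0 x : hfun J C x 0 <= 0.
Proof. by apply: hfun_le => w _; rewrite mulmx0 dotv0l. Qed.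

Lemma hfun_lip (W : R) x y u : (forall w, w \in C -> `|w| <= W) ->
  hfun J C y u <= hfun J C x u + m%:R * (n%:R * (`|J y - J x| * `|u|) * W).
Proof.
move=> HW; apply: hfun_le => w wC.
have -> : J y *m u = J x *m u + (J y - J x) *m u by rewrite mulmxBl addrC subrK.
rewrite dotvDl lerD ?hfun_ge //.
apply: le_trans (ler_norm _) _; apply: le_trans (dotv_bound _ _) _.
rewrite ler_wpM2l // ler_pM // ?mulmx_bound ?HW //.
Qed.

End Hf.

Lemma series_bounded (R : realType) (f : nat -> R) (B : R) :
  (forall k, 0 <= f k) -> (forall N, \sum_(0 <= k < N) f k <= B) ->
  (\sum_(0 <= k <oo) (f k)%:E < +oo)%E.
Proof.
move=> f0 fB; apply: (@le_lt_trans _ _ B%:E); last exact: ltry.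
apply: lime_le; first by apply: is_cvg_nneseries => k _ _; rewrite lee_fin.
by apply: nearW => N; rewrite sumEFin lee_fin.
Qed.
Theorem mainTheorem2 (R : realType) (n m : nat)
  (K : set 'cV[R]_m) (C : seq 'cV[R]_m)
  (F : 'cV[R]_n -> 'cV[R]_m) (J : 'cV[R]_n -> 'M[R]_(m, n))
  (rho sigma mu : R) (e : 'cV[R]_m)
  (x d v : nat -> 'cV[R]_n) (alpha beta : nat -> R) :
  (* the cone K *)
  convex_cone K -> pointed_cone K -> closed K -> interior K !=set0 ->
  finitely_generated K ->
  (* the finite set C *)
  0 \notin C -> polar_cone K = cone_of (conv_hull C) ->
  (* F continuously differentiable with Jacobian J *)
  (forall z, differentiable F z) -> (forall z u, 'd F z u = J z *m u) ->
  continuous J ->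
  (* parameters *)
  0 < rho -> rho < sigma -> sigma < 1 -> 2 < mu ->
  interior K e -> (forall w, w \in C -> dotv w e <= 1) ->
  (* (A1) *)
  (exists (Lam : set 'cV[R]_n) (L : R), open Lam /\
     [set z | leK K (F z) (F (x 0))] `<=` Lam /\
     (forall y z, Lam y -> Lam z -> `|J y - J z| <= L * `|y - z|)) ->
  (* (A2) *)
  (forall D : nat -> 'cV[R]_m,
     (forall k, exists z, leK K (F z) (F (x 0)) /\ D k = F z) ->
     (forall k, leK K (D k.+1) (D k)) ->
     exists D0, forall k, leK K D0 (D k)) ->
  (* the algorithm *)
  (forall k, is_v J C (x k) (v k)) ->
  (forall k, v k != 0) ->
  d 0 = v 0 ->
  (forall k, beta k.+1 =
     - hfun J C (x k.+1) (v k.+1) *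
       (`|hfun J C (x k) (v k.+1)| + hfun J C (x k) (v k.+1)) /
     Num.max (mu * `|hfun J C (x k.+1) (d k) * hfun J C (x k) (v k.+1)|)
             (- mu * hfun J C (x k) (v k) * `|hfun J C (x k) (v k.+1)|)) ->
  (forall k, d k.+1 = v k.+1 + beta k.+1 *: d k) ->
  (forall k, 0 < alpha k) ->
  (forall k, x k.+1 = x k + alpha k *: d k) ->
  (forall k, leK K (F (x k + alpha k *: d k))
                   (F (x k) + (rho * alpha k * hfun J C (x k) (d k)) *: e)) ->
  (forall k, hfun J C (x k + alpha k *: d k) (d k) >= sigma * hfun J C (x k) (d k)) ->
  (\sum_(0 <= k <oo) ((hfun J C (x k) (d k)) ^+ 2 / dotv (d k) (d k))%:E < +oo)%E.
Proof.
move=> Kc Kp Kcl Kint Kfg C0 Kpol Fd FdJ Jc rho0 rs s1 mu2 eK eC A1 A2 isv vne d0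
  hbeta hd al0 hx W1 W2.
case: Kc => K0 [Kadd Kscl].
have Cne : C != [::].
  have : polar_cone K 0 by move=> u _; rewrite dotv0l.
  rewrite Kpol => -[t [a1 [_ [[t' [_ [s1' _]]] _]]]].
  by move: s1'; case E: C => [|a0 s] //=; rewrite big_ord0 => /eqP; rewrite eq_sym oner_eq0.
set w0 := head 0 C.
have w0C : w0 \in C by rewrite /w0; move: Cne; case E: C => [|a0 s] // _; rewrite mem_head.
have w0n0 : w0 != 0 by apply: contraNneq C0 => <-.
have w0pol : forall u, K u -> 0 <= dotv w0 u.
  have : polar_cone K w0.
    rewrite Kpol; exists 1, w0; split => //; split; last by rewrite scale1r.
    rewrite /w0; move: Cne; case E: C => [|a0 s] // _ /=.
    exists (fun i => (i == 0%N)%:R); split; first by move=> i; rewrite ler0n.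
    rewrite !big_ord_recl /= !big1 ?addr0 ?scale1r //.
      by move=> i _; rewrite scale0r.
  by [].
have eKK : K e by apply: nbhs_singleton.
have ce0 : 0 < dotv w0 e.
  move/nbhs_ballP: eK => -[eps eps0 Hb].
  have nw0 : 0 < `|w0| by rewrite normr_gt0.
  set del := eps / (2 * `|w0|).
  have del0 : 0 < del by rewrite divr_gt0 // mulr_gt0.
  have : K (e - del *: w0).
    apply: Hb; rewrite -ball_normE /= opprB addrC subrK normrZ gtr0_norm //.
    have -> : del * `|w0| = eps / 2 by rewrite /del; field; rewrite gt_eqF.
    by rewrite ltr_pdivrMr // ltr_pMr // ltr1n.
  move/w0pol; rewrite dotvBr dotvZr.
  have := dotv_gt0 w0n0 => p0.
  have : 0 < del * dotv w0 w0 by rewrite mulr_gt0.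
  lra.
have hv0 : forall k, hfun J C (x k) (v k) <= 0.
  move=> k; have := isv k 0; rewrite dotv0l mul0r addr0 => H.
  have := hfun0 J Cne (x k); have := dotv_ge0 (v k).
  move: H; move=> H1 H2; lra.
have hd0 : forall k, hfun J C (x k) (d k) <= 0.
  case => [|k]; first by rewrite d0.
  rewrite hd; apply: le_trans (hfun_add J Cne _ _ _) _.
  set hv := hfun J C (x k.+1) (v k.+1).
  set hdk := hfun J C (x k.+1) (d k).
  set a := hfun J C (x k) (v k.+1).
  set D := Num.max (mu * `|hdk * a|) (- mu * hfun J C (x k) (v k) * `|a|).
  have D0 : 0 <= D by rewrite /D le_max mulr_ge0 ?orTb // ltW // (lt_trans _ mu2).
  have b0 : 0 <= beta k.+1.
    rewrite hbeta -/hv -/a -/hdk -/D divr_ge0 // mulr_ge0 //; first by rewrite oppr_ge0 hv0.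
    by have := ler_norm (- a); rewrite normrN => ?; lra.
  have : beta k.+1 * `|hdk| <= - hv.
    rewrite hbeta -/hv -/a -/hdk -/D.
    have [->|Dn0] := eqVneq D 0.
      by rewrite invr0 mulr0 mul0r oppr_ge0 hv0.
    have Dp : 0 < D by rewrite lt_def Dn0 D0.
    rewrite mulrAC ler_pdivrMr //.
    have : mu * `|hdk * a| <= D by rewrite /D le_max lexx.
    rewrite normrM.
    have hv' : 0 <= - hv by rewrite oppr_ge0 hv0.
    have aa : `|a| + a <= 2 * `|a| by have := ler_norm a; lra.
    have n1 := normr_ge0 hdk; have n2 := normr_ge0 a.
    move=> HD.
    have S1 : - hv * (`|a| + a) * `|hdk| <= - hv * (2 * `|a|) * `|hdk|.
      by rewrite ler_wpM2r // ler_wpM2l.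
    have S2 : - hv * (2 * `|a|) * `|hdk| <= - hv * (mu * (`|hdk| * `|a|)).
      rewrite -mulrA ler_wpM2l //.
      have -> : 2 * `|a| * `|hdk| = (`|hdk| * `|a|) * 2 by ring.
      rewrite [X in _ <= X]mulrC ler_wpM2l ?mulr_ge0 //; lra.
    have S3 : - hv * (mu * (`|hdk| * `|a|)) <= - hv * D by rewrite ler_wpM2l.
    lra.
  have := hfun_scale J Cne (x k.+1) (d k) b0; rewrite -/hdk => H1 H2.
  have := ler_norm hdk => H3.
  have H4 : beta k.+1 * hdk <= beta k.+1 * `|hdk| by rewrite ler_wpM2l.
  rewrite -/hv; lra.
have cle0 : forall k, rho * alpha k * hfun J C (x k) (d k) <= 0.
  by move=> k; rewrite mulr_ge0_le0 // mulr_ge0 // ltW.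
have step : forall k, K (F (x k) - F (x k.+1)).
  move=> k; have := W1 k; rewrite /leK -hx => H.
  have H2 : K ((- (rho * alpha k * hfun J C (x k) (d k))) *: e).
    by apply: Kscl => //; rewrite oppr_ge0.
  by have := Kadd _ _ H H2; rewrite scaleNr addrAC addrK.
have inL : forall k, K (F (x 0) - F (x k)).
  elim=> [|k IH]; first by rewrite subrr.
  have -> : F (x 0) - F (x k.+1) = (F (x 0) - F (x k)) + (F (x k) - F (x k.+1)).
    by rewrite addrA subrK.
  exact: Kadd.
case: A1 => Lam [L [_ [LamL Lip]]].
have inLam : forall k, Lam (x k) by move=> k; apply: LamL; exact: (inL k).
have [D0 HD0] := A2 (fun k => F (x k)) (fun k => ex_intro _ (x k) (conj (inL k) erefl)) step.
set W := \big[Num.max/0]_(w <- C) `|w|.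
have HW : forall w, w \in C -> `|w| <= W by move=> w wC; apply: le_bigmax_seq.
have W0 : 0 <= W by apply: le_trans (HW _ w0C); exact: normr_ge0.
set Q := m%:R * (n%:R * `|L| * W).
have Q0 : 0 <= Q by rewrite /Q !mulr_ge0.
have lip : forall k, hfun J C (x k.+1) (d k) <=
    hfun J C (x k) (d k) + Q * alpha k * dotv (d k) (d k).
  move=> k; apply: le_trans (hfun_lip J Cne (x k) (x k.+1) (d k) HW) _.
  rewrite lerD2l.
  have e1 : `|J (x k.+1) - J (x k)| * `|d k| <= `|L| * alpha k * dotv (d k) (d k).
    have := Lip _ _ (inLam k.+1) (inLam k).
    rewrite hx addrAC subrr add0r normrZ gtr0_norm // => H.
    have sq := norm_sq_dotv (d k).
    have nd := normr_ge0 (d k).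
    have a0 := al0 k.
    have H1 : `|J (x k + alpha k *: d k) - J (x k)| * `|d k| <= L * (alpha k * `|d k|) * `|d k|.
      by rewrite ler_wpM2r.
    have H2 : L * (alpha k * `|d k|) * `|d k| <= `|L| * (alpha k * `|d k| ^+ 2).
      have -> : L * (alpha k * `|d k|) * `|d k| = L * (alpha k * `|d k| ^+ 2) by ring.
      apply: ler_wpM2r; [by rewrite mulr_ge0 ?sqr_ge0 // ltW | exact: ler_norm].
    have H3 : `|L| * (alpha k * `|d k| ^+ 2) <= `|L| * alpha k * dotv (d k) (d k).
      by rewrite -mulrA ler_wpM2l // ler_wpM2l // ltW.
    lra.
  have -> : Q * alpha k * dotv (d k) (d k) =
    m%:R * (n%:R * (`|L| * alpha k * dotv (d k) (d k)) * W) by rewrite /Q; ring.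
  by rewrite ler_wpM2l // ler_wpM2r // ler_wpM2l.
set phi := fun k => dotv w0 (F (x k)).
set ce := dotv w0 e.
set kap := rho * ce * (1 - sigma).
have kap0 : 0 < kap by rewrite /kap !mulr_gt0 // subr_gt0.
have perstep : forall k, kap * (hfun J C (x k) (d k) ^+ 2 / dotv (d k) (d k))
    <= Q * (phi k - phi k.+1).
  move=> k.
  have P1 := w0pol _ (W1 k); rewrite -hx !dotvBr dotvDr dotvZr -/ce in P1.
  have P2 := W2 k; rewrite -hx in P2.
  have L1 := lip k.
  have h0 := hd0 k.
  have cl := cle0 k.
  have P3 : rho * alpha k * hfun J C (x k) (d k) * ce <= 0.
    by rewrite mulr_le0_ge0 // ltW.
  have P4 : 0 <= phi k - phi k.+1 by rewrite /phi; lra.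
  have [dd0|ddp] := eqVneq (dotv (d k) (d k)) 0.
    by rewrite dd0 invr0 !mulr0 mulr_ge0.
  have ddp' : 0 < dotv (d k) (d k) by rewrite lt_def ddp dotv_ge0.
  set a := - hfun J C (x k) (d k).
  have a0 : 0 <= a by rewrite /a oppr_ge0.
  have A : (1 - sigma) * a <= Q * alpha k * dotv (d k) (d k) by rewrite /a; lra.
  have X : (1 - sigma) * a / dotv (d k) (d k) <= Q * alpha k by rewrite ler_pdivrMr.
  have -> : kap * (hfun J C (x k) (d k) ^+ 2 / dotv (d k) (d k)) =
      (rho * ce * a) * ((1 - sigma) * a / dotv (d k) (d k)).
    by rewrite /kap /a; ring.
  apply: le_trans (ler_wpM2l _ X) _; first by rewrite !mulr_ge0 // ltW.
  have -> : rho * ce * a * (Q * alpha k) = Q * (- (rho * alpha k * hfun J C (x k) (d k) * ce)).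
    by rewrite /a; ring.
  rewrite ler_wpM2l // /phi; lra.
have sumb : forall N, kap * (\sum_(0 <= k < N) (hfun J C (x k) (d k) ^+ 2 / dotv (d k) (d k)))
    <= Q * (phi 0 - phi N).
  elim=> [|N IH]; first by rewrite big_geq // mulr0 subrr mulr0.
  rewrite big_nat_recr //= mulrDr.
  have := perstep N; lra.
apply: (@series_bounded _ _ (Q * (phi 0 - dotv w0 D0) / kap)).
  by move=> k; rewrite divr_ge0 ?sqr_ge0 ?dotv_ge0.
move=> N; rewrite ler_pdivlMr // mulrC.
apply: le_trans (sumb N) _; rewrite ler_wpM2l // lerD2l lerN2.
by have := w0pol _ (HD0 N); rewrite /phi dotvBr subr_ge0.
Qed.
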